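(* Let $\Gamma$ be an abelian group containing no element of order two. Let $M_1,M_2$ be matroids on a common ground set $E$, $\psi\colon E\to\Gamma$ a labeling, and $B$ a common basis of $M_1$ and $M_2$. If $C$ is a directed cycle of $D_{M_1,M_2}(B)$ with $\psi'(C)\neq 0$ such that no directed cycle $C'$ of $D_{M_1,M_2}(B)$ with $\psi'(C')\ne 0$ satisfies $V(C')\subsetneq V(C)$, then $B\triangle V(C)$ is a common basis of $M_1$ and $M_2$.
   Context: $\psi(S):=\sum_{x\in S}\psi(x)$. For a common basis $B$ of $M_1,M_2$, the digraph $D_{M_1,M_2}(B)$ has vertex set $E$ and arcs: for each $x\in B$, $y\in E\setminus B$ with $B-x+y$ a basis of $M_1$, an arc $xy$ with label $\psi'(xy):=\psi(y)$; and for each $x\in B$, $y\in E\setminus B$ with $B-x+y$ a basis of $M_2$, an arc $yx$ with label $\psi'(yx):=-\psi(x)$. The label $\psi'(C)$ of a directed cycle is the sum of the labels of its arcs; $C$ is non-zero if $\psi'(C)\neq0$. *)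

(* Defs.v *)
From HB Require Import structures.
From mathcomp Require Import all_boot all_order all_algebra.
Set Implicit Arguments. Unset Strict Implicit. Unset Printing Implicit Defensive.
Import GRing.Theory.
Local Open Scope ring_scope.

Definition matroid_bases (E : finType) (Bs : {set {set E}}) : Prop :=
  Bs != set0 /\
  forall B1 B2, B1 \in Bs -> B2 \in Bs ->
    forall x, x \in B1 :\: B2 ->
      exists2 y, y \in B2 :\: B1 & (y |: (B1 :\ x)) \in Bs.

Definition common_basis (E : finType) (M1 M2 : {set {set E}}) (B : {set E}) :=
  (B \in M1) && (B \in M2).

(* Arcs of D_{M1,M2}(B): x y with x in B, y notin B, B-x+y basis of M1;
   y x with x in B, y notin B, B-x+y basis of M2. *)
Definition exch_arc (E : finType) (M1 M2 : {set {set E}}) (B : {set E}) : rel E :=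
  fun u v =>
    ((u \in B) && (v \notin B) && ((v |: (B :\ u)) \in M1))
 || ((v \in B) && (u \notin B) && ((u |: (B :\ v)) \in M2)).

(* Labels psi': arc x y (x in B) gets psi y; arc y x (x in B) gets - psi x. *)
Definition arc_label (E : finType) (G : zmodType) (psi : E -> G) (B : {set E})
  (u v : E) : G := if u \in B then psi v else - psi v.

(* A directed cycle, given by its (nonempty, repetition-free) cyclic
   sequence of vertices v0 v1 ... v_{k-1}, with arcs v_i v_{i+1} and v_{k-1} v0. *)
Definition dicycle (E : finType) (M1 M2 : {set {set E}}) (B : {set E}) (s : seq E) :=
  [&& s != [::], uniq s & cycle (exch_arc M1 M2 B) s].

Definition cycle_label (E : finType) (G : zmodType) (psi : E -> G) (B : {set E})
  (s : seq E) : G :=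
  \sum_(p <- zip s (rot 1 s)) arc_label psi B p.1 p.2.

Definition cycle_vertices (E : finType) (s : seq E) : {set E} := [set x in s].

Definition symdiff (E : finType) (A C : {set E}) : {set E} := (A :\: C) :|: (C :\: A).

(* Main.v *)
Require Import Defs.
From HB Require Import structures.
From mathcomp Require Import all_boot all_order all_algebra.
From mathcomp Require Import zify.
Set Implicit Arguments. Unset Strict Implicit. Unset Printing Implicit Defensive.
Import GRing.Theory.
Local Open Scope ring_scope.


Definition fB (E : finType) (G : zmodType) (psi : E -> G) (B : {set E}) (v : E) : G :=
  if v \in B then - psi v else psi v.

Lemma arc_labelE (E : finType) (G : zmodType) (M1 M2 : {set {set E}}) (psi : E -> G) B u v :
  exch_arc M1 M2 B u v -> arc_label psi B u v = fB psi B v.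
Proof.
rewrite /exch_arc /arc_label /fB.
by case/orP => /andP[/andP[hu hv] _]; rewrite hu (negbTE hv).
Qed.

Lemma path_label_sum (E : finType) (G : zmodType) (M1 M2 : {set {set E}}) (psi : E -> G) B x t :
  path (exch_arc M1 M2 B) x t ->
  \sum_(p <- zip (belast x t) t) arc_label psi B p.1 p.2 = \sum_(v <- t) fB psi B v.
Proof.
elim: t x => [|y t IH] x /=; first by rewrite !big_nil.
case/andP => hxy hp; rewrite !big_cons /= (arc_labelE _ hxy) IH //.
Qed.

Lemma label_sum (E : finType) (G : zmodType) (M1 M2 : {set {set E}}) (psi : E -> G) B s :
  cycle (exch_arc M1 M2 B) s -> cycle_label psi B s = \sum_(v <- s) fB psi B v.
Proof.
case: s => [|x s]; first by rewrite /cycle_label /= !big_nil.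
rewrite /cycle /cycle_label rot1_cons => hp.
rewrite -{1}(belast_rcons x s x) (path_label_sum _ hp) big_rcons big_cons addrC.
by [].
Qed.


Lemma dup_split (T : eqType) (s : seq T) :
  ~~ uniq s -> exists x p1 p2 p3, s = p1 ++ x :: p2 ++ x :: p3.
Proof.
elim: s => [|y s IH] //=; rewrite negb_and negbK; case/orP => [ys|/IH].
  by case/splitPr: ys => p2 p3; exists y, [::], p2, p3.
by case=> x [p1 [p2 [p3 ->]]]; exists x, (y :: p1), p2, p3.
Qed.

Lemma uniq_cycle_sum (E : finType) (G : zmodType) (M1 M2 : {set {set E}}) (psi : E -> G) B C s :
  dicycle M1 M2 B C ->
  (forall C' : seq E, dicycle M1 M2 B C' -> cycle_label psi B C' != 0 ->
            ~ (cycle_vertices C' \proper cycle_vertices C)) ->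
  dicycle M1 M2 B s -> {subset s <= C} ->
  (cycle_vertices s != cycle_vertices C -> \sum_(v <- s) fB psi B v = 0) /\
  (cycle_vertices s = cycle_vertices C -> \sum_(v <- s) fB psi B v = \sum_(v <- C) fB psi B v).
Proof.
move=> hC hmin hs sub; have /and3P[_ us cs] := hs; have /and3P[_ uC cC] := hC.
split.
  move=> neq; rewrite -(label_sum psi cs); apply/eqP; apply/negPn/negP => nz.
  apply: (hmin s hs nz); rewrite properEneq neq /=.
  by apply/subsetP => x; rewrite !inE; apply: sub.
move=> eqV; rewrite !big_uniq //; apply: eq_bigl => x.
by move/setP: eqV => /(_ x); rewrite !inE.
Qed.

Lemma walk_lemma (E : finType) (G : zmodType) (M1 M2 : {set {set E}}) (psi : E -> G) B C :
  dicycle M1 M2 B C ->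
  (forall C' : seq E, dicycle M1 M2 B C' -> cycle_label psi B C' != 0 ->
            ~ (cycle_vertices C' \proper cycle_vertices C)) ->
  forall n s, (size s <= n)%N -> s != [::] -> cycle (exch_arc M1 M2 B) s -> {subset s <= C} ->
  ((exists2 v, v \in C & v \notin s) -> \sum_(v <- s) fB psi B v = 0) /\
  ((exists2 v, v \in C & count_mem v s <= 1)%N ->
     \sum_(v <- s) fB psi B v = 0 \/ \sum_(v <- s) fB psi B v = \sum_(v <- C) fB psi B v).
Proof.
move=> hC hmin; elim=> [|n IH] s; first by rewrite leqn0 => /nilP ->.
move=> sz ne cs sub.
have [us|nus] := boolP (uniq s).
  have hs : dicycle M1 M2 B s by rewrite /dicycle ne us cs.
  have [h1 h2] := uniq_cycle_sum hC hmin hs sub.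
  split.
    case=> v vC vs; apply: h1; apply/negP => /eqP/setP/(_ v).
    by rewrite !inE (negbTE vs) vC.
  move=> _; have [eqV|neV] := eqVneq (cycle_vertices s) (cycle_vertices C).
    by right; apply: h2.
  by left; apply: h1.
have [x [p1 [p2 [p3 ds]]]] := dup_split nus.
set s0 := rot (size p1) s.
have s0E : s0 = x :: p2 ++ x :: (p3 ++ p1).
  by rewrite /s0 ds rot_size_cat /= -catA.
have ps0 : perm_eq s s0 by rewrite perm_sym perm_rot.
have sumE : \sum_(v <- s) fB psi B v = \sum_(v <- s0) fB psi B v by apply: perm_big.
have cs0 : cycle (exch_arc M1 M2 B) s0 by rewrite /s0 rot_cycle.
move: (p3 ++ p1) s0E => q s0E.
have cs1 : cycle (exch_arc M1 M2 B) (x :: p2).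
  move: cs0; rewrite s0E /cycle rcons_cat cat_path /= => /andP[h1 /andP[h2 _]].
  by rewrite rcons_path h1 h2.
have cs2 : cycle (exch_arc M1 M2 B) (x :: q).
  move: cs0; rewrite s0E /cycle rcons_cat cat_path /= => /andP[_ /andP[_ h3]].
  by [].
have sz0 : size s0 = size s by rewrite size_rot.
have sz1 : (size (x :: p2) <= n)%N.
  move: sz; rewrite -sz0 s0E /= size_cat /=; lia.
have sz2 : (size (x :: q) <= n)%N.
  move: sz; rewrite -sz0 s0E /= size_cat /=; lia.
have sub0 : {subset s0 <= C} by move=> y; rewrite -(perm_mem ps0); apply: sub.
have sub1 : {subset x :: p2 <= C}.
  by move=> y hy; apply: sub0; rewrite s0E -cat_cons mem_cat hy.
have sub2 : {subset x :: q <= C}.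
  move=> y; rewrite inE => /orP[/eqP->|hy]; apply: sub0; rewrite s0E.
    by rewrite inE eqxx.
  by rewrite inE mem_cat inE hy !orbT.
have [A1 A2] := IH _ sz1 isT cs1 sub1.
have [B1 B2] := IH _ sz2 isT cs2 sub2.
have sumE2 : \sum_(v <- s0) fB psi B v =
   \sum_(v <- x :: p2) fB psi B v + \sum_(v <- x :: q) fB psi B v.
  by rewrite s0E -cat_cons big_cat.
have cntE v : count_mem v s = (count_mem v (x :: p2) + count_mem v (x :: q))%N.
  by rewrite (permP ps0) s0E -cat_cons count_cat.
rewrite sumE sumE2; split.
  case=> v vC vs; rewrite A1 ?B1 ?addr0 //; exists v => //.
    by apply: contra vs => hv; rewrite (perm_mem ps0) s0E -cat_cons mem_cat hv orbT.
  by apply: contra vs => hv; rewrite (perm_mem ps0) s0E -cat_cons mem_cat hv.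
case=> v vC; rewrite cntE.
case c1: (count_mem v (x :: p2)) => [|k1].
  rewrite add0n => c2; rewrite A1 ?add0r; last first.
    by exists v => //; rewrite -has_pred1 has_count c1.
  by apply: B2; exists v.
case c2: (count_mem v (x :: q)) => [|k2]; last by rewrite addnS ltnS.
move=> h; rewrite B1 ?addr0; last by exists v => //; rewrite -has_pred1 has_count c2.
by apply: A2; exists v => //; rewrite c1; move: h; rewrite addn0.
Qed.


Ltac split_eqs z :=
  repeat match goal with
  | |- context [z == ?y] => have [->|?] := eqVneq z y
  end.

Ltac rw_facts :=
  repeat match goal with
  | H : (?u == ?v) = false |- context [?u == ?v] => rewrite H
  | H : (?u == ?v) = false |- context [?v == ?u] => rewrite (eq_sym v u) H
  | H : is_true (?u \in ?S) |- context [?u \in ?S] => rewrite H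
  | H : is_true (?u \notin ?S) |- context [?u \in ?S] => rewrite (negbTE H)
  | |- context [?u == ?u] => rewrite eqxx
  end.

Ltac set_solve :=
  let z := fresh "z" in
  apply/setP => z; rewrite !inE; split_eqs z; rw_facts; rewrite /= ?andbT ?andbF ?orbF ?orbT //.

Lemma exA (E : finType) (M : {set {set E}}) (hM : matroid_bases M) (B : {set E}) x0 x a0 a :
 x0 \in B -> x \in B -> x0 != x -> a0 \notin B -> a \notin B -> a0 != a ->
 a0 |: (B :\ x0) \in M -> a |: (B :\ x) \in M -> a |: (B :\ x0) \notin M ->
 a |: ((a0 |: (B :\ x0)) :\ x) \in M.
Proof.
move=> x0B xB nx0x a0B aB na0a h1 h2 h3.
have F1 : (x0 == a) = false by apply/negbTE; apply: contraNneq aB => <-.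
have F2 : (x0 == a0) = false by apply/negbTE; apply: contraNneq a0B => <-.
have F3 : (x == a) = false by apply/negbTE; apply: contraNneq aB => <-.
have F4 : (x == a0) = false by apply/negbTE; apply: contraNneq a0B => <-.
have F5 : (x0 == x) = false by apply/negbTE.
have F6 : (a0 == a) = false by apply/negbTE.
have [_ ex] := hM.
have := ex _ _ h2 h1 x0.
rewrite !inE eqxx F1 F2 F5 x0B /= => /(_ isT) [y].
rewrite !inE => /andP[hy1 hy2] hyM.
move: hy1 hy2; have [ya0|ya0] := eqVneq y a0.
  subst y.
  move=> _ _; move: hyM; congr (_ \in M); set_solve.
move=> hy1 /= /andP[_ yB]; move: hy1; rewrite yB andbT negb_or negbK => /andP[_ /eqP yx].
subst y; case/negP: h3; move: hyM; congr (_ \in M); set_solve.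
Qed.

Lemma exB (E : finType) (M : {set {set E}}) (hM : matroid_bases M) (B : {set E}) x0 x a0 a :
 x0 \in B -> x \in B -> x0 != x -> a0 \notin B -> a \notin B -> a0 != a ->
 B \in M -> a |: ((a0 |: (B :\ x0)) :\ x) \in M -> a |: (B :\ x0) \notin M ->
 a |: (B :\ x) \in M.
Proof.
move=> x0B xB nx0x a0B aB na0a hB h1 h3.
have F1 : (x0 == a) = false by apply/negbTE; apply: contraNneq aB => <-.
have F2 : (x0 == a0) = false by apply/negbTE; apply: contraNneq a0B => <-.
have F3 : (x == a) = false by apply/negbTE; apply: contraNneq aB => <-.
have F4 : (x == a0) = false by apply/negbTE; apply: contraNneq a0B => <-.
have F5 : (x0 == x) = false by apply/negbTE.
have F6 : (a0 == a) = false by apply/negbTE.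
have [_ ex] := hM.
have := ex _ _ h1 hB a0.
rewrite !inE eqxx F6 (eq_sym a0 x) F4 (negbTE a0B) /= => /(_ isT) [y].
rewrite !inE => /andP[hy1 yB] hyM.
have [yx0|yx0] := eqVneq y x0.
  subst y; move: hyM; congr (_ \in M); set_solve.
have [yx|yx] := eqVneq y x.
  subst y; case/negP: h3; move: hyM; congr (_ \in M); set_solve.
by move: hy1; rewrite yB (negbTE yx) (negbTE yx0) /= ?orbT ?andbT; rw_facts.
Qed.



Lemma func_cycle (T : finType) (g : T -> T) (X : {set T}) x1 :
  x1 \in X -> (forall x, x \in X -> g x \in X) ->
  exists Z : seq T, [/\ Z != [::], uniq Z, {subset Z <= X} & fcycle g Z].
Proof.
move=> x1X gX.
have := looping_order g x1; rewrite /looping => /trajectP [i lti Ei].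
set c := iter i g x1.
have [d dE] : exists d, order g x1 = (i + d.+1)%N.
  by exists (order g x1 - i).-1; lia.
have cE : iter d.+1 g c = c by rewrite /c -iterD addnC -dE Ei.
exists (traject g c d.+1); split => //.
- have := orbit_uniq g x1; rewrite /orbit dE trajectD cat_uniq.
  by case/and3P.
- move=> y /trajectP [j _ ->]; rewrite /c -iterD.
  by apply: (iter_in _ gX).
  rewrite trajectS /= (_ : rcons _ c = traject g (g c) d.+1); first exact: fpath_traject.
  by rewrite trajectSr -iterSr cE.
Qed.


Lemma matroid_main (E : finType) (M : {set {set E}}) (hM : matroid_bases M) (m : E -> E) :
  forall n (X B : {set E}), #|X| = n -> B \in M -> X \subset B -> {in X &, injective m} ->
  (forall x, x \in X -> m x \notin B) -> (forall x, x \in X -> m x |: (B :\ x) \in M) ->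
  ((B :\: X) :|: (m @: X) \in M) \/
  exists Z : seq E, [/\ uniq Z, {subset Z <= X}, (exists2 x, x \in Z & next Z x != x) &
       forall x, x \in Z -> m (next Z x) |: (B :\ x) \in M].
Proof.
elim=> [|n IH] X B cX hB sXB injm mB pos.
  by left; rewrite (cards0_eq cX) setD0 imset0 setU0.
case: (boolP [exists x0 in X, [forall x' in X, (x' != x0) ==> (m x' |: (B :\ x0) \notin M)]]).
  case/exists_inP => x0 x0X /forall_inP nout.
  have x0B : x0 \in B by apply: (subsetP sXB).
  have nout' y : y \in X -> y != x0 -> m y |: (B :\ x0) \notin M.
    by move=> yX yx0; have := nout y yX; rewrite yx0.
  set B1 := m x0 |: (B :\ x0); set X1 := X :\ x0.
  have cX1 : #|X1| = n by move: cX; rewrite (cardsD1 x0) x0X add1n => -[].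
  have hB1 : B1 \in M by apply: pos.
  have X1P y : y \in X1 -> [/\ y \in X, y != x0 & y \in B].
    by rewrite !inE => /andP[-> yX]; rewrite yX (subsetP sXB).
  have mneq y : y \in X1 -> m y != m x0.
    by case/X1P => yX yx0 _; apply: contra yx0 => /eqP/injm -> //.
  have sX1B1 : X1 \subset B1.
    by apply/subsetP => y /X1P [_ yx0 yB]; rewrite !inE yx0 yB orbT.
  have injm1 : {in X1 &, injective m}.
    by move=> y z /X1P[yX _ _] /X1P[zX _ _]; apply: injm.
  have mB1 y : y \in X1 -> m y \notin B1.
    move=> yX1; have [yX _ _] := X1P _ yX1.
    by rewrite !inE negb_or (mneq _ yX1) (negbTE (mB _ yX)) andbF.
  have pos1 y : y \in X1 -> m y |: (B1 :\ y) \in M.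
    move=> yX1; have [yX yx0 yB] := X1P _ yX1.
    apply: exA => //; first by rewrite eq_sym.
    - exact: mB.
    - exact: mB.
    - by rewrite eq_sym mneq.
    - exact: pos.
    - exact: nout'.
  case: (IH X1 B1 cX1 hB1 sX1B1 injm1 mB1 pos1) => [hl|[Z [uZ sZ nZ pZ]]].
    left; move: hl; congr (_ \in M).
    have XE : X = x0 |: X1 by rewrite setD1K.
    rewrite [in RHS]XE imsetU1.
    have -> : B1 :\: X1 = m x0 |: (B :\: X).
      apply/setP => z; rewrite !inE.
      have [->|zm] := eqVneq z (m x0).
        rewrite orTb andbT; apply/negP => /andP[_ h].
        by have := mB _ x0X; rewrite (subsetP sXB).
      have [->|zx0] := eqVneq z x0; first by rewrite x0X.
      by [].
    by rewrite -XE -setUA [RHS]setUCA.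
  right; exists Z; split => //.
    by move=> y /sZ /X1P [].
  move=> y yZ; have [yX yx0 yB] := X1P _ (sZ _ yZ).
  have nZX1 : next Z y \in X1 by apply: sZ; rewrite mem_next.
  have [nX nx0 nB] := X1P _ nZX1.
  apply: (exB hM (x0 := x0) (a0 := m x0)) => //.
  - by rewrite eq_sym.
  - exact: mB.
  - exact: mB.
  - by rewrite eq_sym mneq.
  - exact: pZ.
  - exact: nout'.
move=> hno.
pose g x := odflt x [pick x' in X | (x' != x) && (m x' |: (B :\ x) \in M)].
have hg x : x \in X -> [/\ g x \in X, g x != x & m (g x) |: (B :\ x) \in M].
  move=> xX; rewrite /g; case: pickP => [y /andP[yX /andP[yx h]]|none] /=.
    by [].
  exfalso; move/exists_inPn: hno => /(_ x xX) /forall_inPn [y yX].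
  by rewrite negb_imply negbK => hy; have := none y; rewrite yX hy.
have [x1 x1X] : exists x1, x1 \in X.
  by apply/set0Pn; rewrite -card_gt0 cX.
have [Z [nZ uZ sZ cZ]] := func_cycle (g := g) x1X (fun x xX => let: And3 h _ _ := hg x xX in h).
have nE x : x \in Z -> next Z x = g x.
  by move=> xZ; have /eqP := next_cycle cZ xZ.
right; exists Z; split => //.
  case: Z nZ uZ sZ cZ nE => [|z Z'] // _ _ sZ _ nE.
  have zX := sZ z (mem_head _ _).
  by exists z; rewrite ?mem_head // nE ?mem_head //; case: (hg z zX).
move=> x xZ; rewrite nE //; by case: (hg x (sZ _ xZ)).
Qed.


Lemma orbit_sub (T : finType) (f : T -> T) (S : {set T}) z :
  (forall v, v \in S -> f v \in S) -> z \in S -> {subset orbit f z <= S}.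
Proof.
move=> fS zS y; rewrite /orbit => /trajectP [i _ ->].
by apply: (iter_in _ fS).
Qed.

Lemma orbit_closed (T : finType) (f : T -> T) z y :
  injective f -> f y \in orbit f z -> y \in orbit f z.
Proof.
move=> injf; rewrite -!fconnect_orbit => h.
rewrite fconnect_sym //; apply: connect_trans (fconnect1 f y) _.
by rewrite fconnect_sym.
Qed.

Lemma inv_sum (E : finType) (G : zmodType) (M1 M2 : {set {set E}}) (psi : E -> G) B C
  (tau : E -> E) :
  dicycle M1 M2 B C ->
  (forall C' : seq E, dicycle M1 M2 B C' -> cycle_label psi B C' != 0 ->
            ~ (cycle_vertices C' \proper cycle_vertices C)) ->
  injective tau -> (forall v, v \in C -> tau v \in C) ->
  (forall v, v \in C -> exch_arc M1 M2 B v (tau v)) ->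
  forall n (S : {set E}), (#|S| <= n)%N -> S \subset cycle_vertices C ->
  (forall v, v \in S -> tau v \in S) -> S != cycle_vertices C ->
  \sum_(v in S) fB psi B v = 0.
Proof.
move=> hC hmin injt tC tarc; elim=> [|n IH] S cS sSV tS nSV.
  by move: cS; rewrite leqn0 cards_eq0 => /eqP ->; rewrite big_set0.
have [->|[z zS]] := set_0Vmem S; first by rewrite big_set0.
set O := orbit tau z.
have OS := orbit_sub tS zS.
have zO : z \in O by apply: in_orbit.
have sOC : {subset O <= C}.
  by move=> y /OS /(subsetP sSV); rewrite inE.
have hO : dicycle M1 M2 B O.
  apply/and3P; split; [ | exact: orbit_uniq | ].
    by apply/eqP => e; rewrite e in zO.
  apply: (sub_in_cycle (P := mem C) (e := frel tau)).
  - by move=> u v uC _ /eqP <-; apply: tarc.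
  - by apply/allP.
  exact: cycle_orbit.
have [h1 _] := uniq_cycle_sum hC hmin hO sOC.
set O' := [set x in O].
have sO'S : O' \subset S by apply/subsetP => y; rewrite inE; apply: OS.
rewrite (big_setID O') (setIidPr sO'S).
have sumO : \sum_(v <- O) fB psi B v = 0.
  apply: h1; apply: contra nSV => /eqP e.
  rewrite eqEsubset sSV /=; apply/subsetP => y; rewrite -e inE => /OS.
  by [].
have -> : \sum_(i in O') fB psi B i = 0.
  apply: (etrans _ sumO); rewrite big_uniq ?orbit_uniq //.
  by apply: eq_bigl => y; rewrite inE.
rewrite [LHS]add0r; apply: IH.
- rewrite cardsD (setIidPr sO'S); move: cS; have : (0 < #|O'|)%N.
    by apply/card_gt0P; exists z; rewrite inE.
  by lia.
- by apply: subset_trans sSV; apply: subsetDl.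
- move=> v; rewrite !inE => /andP[vO vS]; rewrite tS // andbT.
  by apply: contra vO; apply: orbit_closed.
- apply: contra nSV => /eqP e; rewrite eqEsubset sSV /=.
  have : z \in cycle_vertices C by apply: (subsetP sSV).
  by rewrite -e !inE zO.
Qed.


Lemma arcB (E : finType) (M1 M2 : {set {set E}}) B u v :
  exch_arc M1 M2 B u v -> u \in B -> (v \notin B) && (v |: (B :\ u) \in M1).
Proof.
rewrite /exch_arc => /orP[/andP[/andP[_ h1] h2]|/andP[/andP[_ h] _]] uB; first by rewrite h1 h2.
by rewrite uB in h.
Qed.

Lemma arcNB (E : finType) (M1 M2 : {set {set E}}) B u v :
  exch_arc M1 M2 B u v -> u \notin B -> v \in B.
Proof.
rewrite /exch_arc => /orP[/andP[/andP[h _] _]|/andP[/andP[-> _] _]] // uB.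
by rewrite h in uB.
Qed.

Lemma grp_id (G : zmodType) (a b1 b2 c d e : G) :
  a + (b1 + (b2 + (c + e))) = a + (b1 + (b2 + (c + d))) + (a + (c + e)) - (c + (d + a)).
Proof.
apply: (addIr (c + (d + a))); rewrite subrK.
pose F i := nth 0 [:: a; b1; b2; c; d; e] i.
have H : \sum_(i <- [:: 0;1;2;3;5;3;4;0]%N) F i = \sum_(i <- [:: 0;1;2;3;4;0;3;5]%N) F i.
  by apply: perm_big.
by move: H; rewrite !big_cons big_nil /F /= !addr0 !addrA => ->.
Qed.

Lemma core (E : finType) (G : zmodType) (no2tors : forall g : G, g + g = 0 -> g = 0)
  (M1 M2 : {set {set E}}) (psi : E -> G) B C :
  dicycle M1 M2 B C -> cycle_label psi B C != 0 ->
  (forall C' : seq E, dicycle M1 M2 B C' -> cycle_label psi B C' != 0 ->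
            ~ (cycle_vertices C' \proper cycle_vertices C)) ->
  forall Z : seq E, uniq Z -> {subset Z <= [set x in C | x \in B]} ->
  (exists2 x, x \in Z & next Z x != x) ->
  (forall x, x \in Z -> next C (next Z x) |: (B :\ x) \in M1) -> False.
Proof.
move=> hC hCnz hmin Z uZ sZ [x xZ nZx] pZ.
have /and3P[neC uC cC] := hC.
set e := exch_arc M1 M2 B.
set f := fB psi B.
set L := \sum_(v <- C) f v.
have hL : cycle_label psi B C = L by rewrite (label_sum psi cC).
have ZC y : y \in Z -> (y \in C) && (y \in B) by move=> /sZ; rewrite inE.
set tau := fun v => next C (next Z v).
have injt : injective tau.
  by apply: inj_comp; apply: can_inj; apply: prev_next.
have nZ v : v \notin Z -> next Z v = v.
  by move=> vZ; rewrite next_nth (negbTE vZ).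
have tC v : v \in C -> tau v \in C.
  move=> vC; rewrite /tau mem_next.
  case: (boolP (v \in Z)) => [vZ|vZ]; last by rewrite nZ.
  by rewrite -(mem_next Z) in vZ; case/andP: (ZC _ vZ).
have tarc v : v \in C -> e v (tau v).
  move=> vC; case: (boolP (v \in Z)) => vZ; last by rewrite /tau nZ //; apply: next_cycle.
  have wZ : next Z v \in Z by rewrite mem_next.
  have /andP[wC wB] := ZC _ wZ.
  have /andP[tB _] := arcB (next_cycle cC wC) wB.
  have /andP[_ vB] := ZC _ vZ.
  by rewrite /e /exch_arc vB tB (pZ _ vZ).
have /andP[xC xB] := ZC _ xZ.
set y := tau x.
have yNB : y \notin B by case/andP: (arcB (tarc _ xC) xB).
have yx : y != x by apply: contraNneq yNB => ->.
have yC : y \in C by apply: tC.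
set O := orbit tau x.
have cO : fcycle tau O := cycle_orbit injt x.
have uO : uniq O := orbit_uniq tau x.
have [o Oe] : exists o, O = x :: y :: o.
  move: cO; rewrite /O /orbit -orderSpred.
  case: (order tau x).-1 => [|k] /=; first by rewrite andbT => /eqP; move/eqP: yx.
  by move=> _; exists (traject tau (tau (tau x)) k).
set V := cycle_vertices C.
have sOC : {subset O <= C}.
  move=> v vO; have : v \in V.
    by apply: (orbit_sub (f := tau) (S := V) _ _ vO) => [w|]; rewrite !inE //; apply: tC.
  by rewrite inE.
set O' := [set v in O].
have sumO : \sum_(v <- O) f v = L.
  have sO'V : O' \subset V by apply/subsetP => v; rewrite !inE; apply: sOC.
  have h0 : \sum_(v in V :\: O') f v = 0.
    apply: (inv_sum hC hmin injt tC tarc (leqnn _)).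
    - exact: subsetDl.
    - move=> v; rewrite !inE => /andP[vO vC]; rewrite tC // andbT.
      by apply: contra vO; apply: orbit_closed.
    - apply/negP => /eqP/setP/(_ x); rewrite !inE xC andbT.
      by rewrite Oe mem_head.
  rewrite /L [RHS]big_uniq //.
  have -> : \sum_(i in C) f i = \sum_(i in V) f i by apply: eq_bigl => v; rewrite inE.
  rewrite [RHS](big_setID O') (setIidPr sO'V) h0 [RHS]addr0 big_uniq //.
  by apply: eq_bigl => v; rewrite inE.
case: (rot_to xC) => i s' rE.
have ys' : y \in s'.
  by have := yC; rewrite -(mem_rot i) rE inE (negbTE yx).
case/splitPr: ys' rE => p q rE.
have uC' : uniq (x :: p ++ y :: q) by rewrite -rE rot_uniq.
have cC' : cycle e (x :: p ++ y :: q) by rewrite -rE rot_cycle.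
have sC' : \sum_(v <- x :: p ++ y :: q) f v = L.
  by rewrite -rE /L; apply: perm_big; rewrite perm_rot.
have mC' : {subset x :: p ++ y :: q <= C} by move=> v; rewrite -rE mem_rot.
case: p => [|a p] in rE uC' cC' sC' mC'.
  have := next_rot i uC x; rewrite rE /= eqxx => nx.
  move/eqP: nZx; apply; apply: (can_inj (prev_next uC)).
  by rewrite -nx.
have [xN uN] : (x \notin a :: p ++ y :: q) /\ uniq (a :: p ++ y :: q) by case/andP: uC'.
have [aN _] : (a \notin p ++ y :: q) /\ uniq (p ++ y :: q) by case/andP: uN.
have uyq : uniq (y :: q) by move: uN; rewrite -cat_cons cat_uniq => /and3P[].
have xNyq : x \notin y :: q by apply: contra xN; rewrite -cat_cons mem_cat orbC => ->.
have aNyq : a \notin y :: q by apply: contra aN; rewrite mem_cat orbC => ->.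
have xa : a != x by apply: contraNneq xN => <-; rewrite mem_head.
have [pa pyq] : path e x (a :: p) /\ path e (last x (a :: p)) (y :: rcons q x).
  by move: cC'; rewrite /cycle rcons_cat cat_path => /andP[].
set St := y :: rcons q x.
have hSt : dicycle M1 M2 B St.
  apply/and3P; split => //.
    rewrite /St /= rcons_uniq; move: uyq xNyq; rewrite /= mem_rcons !inE negb_or (negbTE yx) /=.
    by move=> /andP[-> ->] /andP[_ ->].
  rewrite /St /cycle rcons_path; move: pyq => /= /andP[_ ->] /=.
  by rewrite last_rcons; apply: tarc.
have sSt : {subset St <= C}.
  move=> v; rewrite /St inE mem_rcons inE => /or3P[/eqP->|/eqP->|vq] //.
  by apply: mC'; rewrite !(inE, mem_cat) vq !orbT.
have sumSt : \sum_(v <- St) f v = 0.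
  have [h1 _] := uniq_cycle_sum hC hmin hSt sSt.
  have aC : a \in C by apply: mC'; rewrite !inE eqxx orbT.
  apply: h1; apply/negP => /eqP/setP/(_ a); rewrite !inE aC mem_rcons inE (negbTE xa) /=.
  by move: aNyq; rewrite inE => /negbTE ->.
set R := x :: (a :: p) ++ y :: o.
have cR : cycle e R.
  rewrite /R /cycle rcons_cat cat_path pa /=.
  move: pyq => /= /andP[-> _] /=.
  move: cO; rewrite Oe /cycle /= => /andP[_ h].
  apply: (sub_in_path (P := mem C) (e := frel tau)) => //.
  - by move=> u v uC0 _ /eqP <-; apply: tarc.
  - apply/allP => v; rewrite /= inE mem_rcons inE => /or3P[/eqP->|/eqP->|vo] //.
    by apply: sOC; rewrite Oe !inE vo !orbT.
have sR : {subset R <= C}.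
  move=> v; rewrite /R inE mem_cat => /or3P[/eqP->|vp|vyo] //.
    by apply: mC'; rewrite inE mem_cat vp orbT.
  by apply: sOC; rewrite Oe inE vyo orbT.
have cntR : (count_mem x R <= 1)%N.
  have c1 : count_mem x (a :: p) = 0%N.
    apply/eqP; rewrite -leqn0 leqNgt -has_count has_pred1.
    by apply: contra xN; rewrite -cat_cons mem_cat => ->.
  have c2 : count_mem x (y :: o) = 0%N.
    apply/eqP; rewrite -leqn0 leqNgt -has_count has_pred1.
    by move: uO; rewrite Oe => /andP[].
  by rewrite /R -[x :: _]/([:: x] ++ ((a :: p) ++ y :: o)) !count_cat c1 c2 /= eqxx.
have [_ hw] := walk_lemma hC hmin (leqnn (size R)) isT cR sR.
have eR : \sum_(v <- R) f v = L + L.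
  move: sC' sumO sumSt; rewrite /R /St Oe !big_cons !big_cat !big_cons big_rcons /=.
  move=> h1 h2 h3.
  by rewrite (grp_id (f x) _ _ (f y) (\sum_(v <- q) f v)) h1 h2 h3 subr0.
have L0 : L = 0.
  move: (hw (ex_intro2 _ _ x xC cntR)); rewrite -/f -/L eR; case=> h; first by apply: no2tors.
  by apply: (addrI L); rewrite h addr0.
by move: hCnz; rewrite hL L0 eqxx.
Qed.


Lemma half_M (E : finType) (G : zmodType) (no2tors : forall g : G, g + g = 0 -> g = 0)
  (M1 M2 : {set {set E}}) (hM1 : matroid_bases M1) (psi : E -> G) B C :
  B \in M1 -> dicycle M1 M2 B C -> cycle_label psi B C != 0 ->
  (forall C' : seq E, dicycle M1 M2 B C' -> cycle_label psi B C' != 0 ->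
            ~ (cycle_vertices C' \proper cycle_vertices C)) ->
  symdiff B (cycle_vertices C) \in M1.
Proof.
move=> hB hC hCnz hmin.
have /and3P[neC uC cC] := hC.
set X := [set v in C | v \in B].
have XP v : v \in X -> (v \in C) && (v \in B) by rewrite inE.
have injn : {in X &, injective (next C)}.
  by apply: in2W; apply: can_inj (prev_next uC).
have sXB : X \subset B by apply/subsetP => v /XP /andP[].
have arcX v : v \in X -> (next C v \notin B) && (next C v |: (B :\ v) \in M1).
  by move=> /XP /andP[vC vB]; apply: arcB (next_cycle cC vC) vB.
have mB v : v \in X -> next C v \notin B by move=> /arcX /andP[].
have pos v : v \in X -> next C v |: (B :\ v) \in M1 by move=> /arcX /andP[].
case: (matroid_main hM1 (erefl #|X|) hB sXB injn mB pos) => [h|].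
  move: h; congr (_ \in M1); rewrite /symdiff; congr (_ :|: _).
    by apply/setP => z; rewrite !inE; case: (z \in B); rewrite ?andbT ?andbF.
  apply/setP => z; rewrite !inE; apply/imsetP/idP.
    case=> w /XP /andP[wC wB] ->; rewrite mem_next wC andbT.
    by case/andP: (arcB (next_cycle cC wC) wB).
  case/andP => zB zC; exists (prev C z); last by rewrite next_prev.
  rewrite inE mem_prev zC /=; apply: contraNT zB => wB.
  exact: arcNB (prev_cycle cC zC) wB.
case=> Z [uZ sZ nZ pZ]; exfalso.
exact: (core no2tors hC hCnz hmin uZ sZ nZ pZ).
Qed.


Lemma arc_swap (E : finType) (M1 M2 : {set {set E}}) B u v :
  exch_arc M2 M1 B u v = exch_arc M1 M2 B v u.
Proof. by rewrite /exch_arc orbC. Qed.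

Lemma cycle_rev (E : finType) (M1 M2 : {set {set E}}) B s :
  cycle (exch_arc M2 M1 B) (rev s) = cycle (exch_arc M1 M2 B) s.
Proof. by rewrite rev_cycle; apply: eq_cycle => u v; rewrite arc_swap. Qed.

Lemma dicycle_rev (E : finType) (M1 M2 : {set {set E}}) B s :
  dicycle M2 M1 B (rev s) = dicycle M1 M2 B s.
Proof. by rewrite /dicycle cycle_rev rev_uniq -!size_eq0 size_rev. Qed.

Lemma cv_rev (E : finType) (s : seq E) : cycle_vertices (rev s) = cycle_vertices s.
Proof. by apply/setP => x; rewrite !inE mem_rev. Qed.

Lemma label_rev (E : finType) (G : zmodType) (M1 M2 : {set {set E}}) (psi : E -> G) B s :
  dicycle M1 M2 B s -> cycle_label psi B (rev s) = cycle_label psi B s.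
Proof.
move=> /and3P[_ _ cs].
have cs' : cycle (exch_arc M2 M1 B) (rev s) by rewrite cycle_rev.
by rewrite (label_sum psi cs') (label_sum psi cs); apply: perm_big; rewrite perm_rev.
Qed.

Theorem lemma3p7 (G : zmodType)
  (no2tors : forall g : G, g + g = 0 -> g = 0)
  (E : finType) (M1 M2 : {set {set E}})
  (hM1 : matroid_bases M1) (hM2 : matroid_bases M2)
  (psi : E -> G) (B : {set E}) (hB : common_basis M1 M2 B)
  (C : seq E) (hC : dicycle M1 M2 B C) (hCnz : cycle_label psi B C != 0)
  (hmin : forall C' : seq E, dicycle M1 M2 B C' -> cycle_label psi B C' != 0 ->
            ~ (cycle_vertices C' \proper cycle_vertices C)) :
  common_basis M1 M2 (symdiff B (cycle_vertices C)).
Proof.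
have /andP[hB1 hB2] := hB.
rewrite /common_basis (half_M no2tors hM1 hB1 hC hCnz hmin) /=.
rewrite -(cv_rev C).
apply: (half_M no2tors hM2 (M2 := M1) (psi := psi) hB2).
- by rewrite dicycle_rev.
- by rewrite (label_rev psi hC).
- move=> C' hC' nz; rewrite cv_rev -(cv_rev C').
  apply: hmin; first by rewrite -dicycle_rev revK.
  by rewrite (label_rev psi hC').
Qed.
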